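(* Let $\mathcal{G}$ be a finite weighted coloured--edge graph with $n\ge 2$ vertices and $k$ colours, and let $u\ne v$ be vertices. Then any set $S$ of minimal paths from $u$ to $v$ that are pairwise incomparable has $|S|\le k^{n-1}$. Equivalently, the set of distinct weight vectors $(\omega_c(p))_{c\in M}$ of minimal paths $p$ from $u$ to $v$ has at most $k^{n-1}$ elements.
   Context: A weighted coloured--edge graph $\mathcal{G}=\langle V,E,\omega,\lambda\rangle$ consists of a directed multigraph with vertex set $V$ and edge set $E$ (each edge $e$ has an initial vertex and a distinct terminal vertex; multiple edges between the same ordered pair are allowed), a weight function $\omega:E\to\mathbb{R}^+$ (strictly positive reals), and a surjective colour function $\lambda:E\to M$ onto a set $M$ of colours; $k=|M|$. A path from $u$ to $v$ is a sequence of edges $e_1,\dots,e_l$ ($l\ge1$) such that the initial vertex of $e_1$ is $u$, the terminal vertex of $e_l$ is $v$, the terminal vertex of $e_i$ is the initial vertex of $e_{i+1}$, and no vertex is visited twice. For a path $p$ and colour $c$, $\omega_c(p)$ is the sum of $\omega(e)$ over edges $e$ of $p$ with $\lambda(e)=c$. For paths $p,q$ from $u$ to $v$, $p\le q$ means $\omega_c(p)\le\omega_c(q)$ for all $c\in M$; $p,q$ are incomparable if neither $p\le q$ nor $q\le p$. A path $p$ from $u$ to $v$ is minimal if there is no path $q$ from $u$ to $v$ with $q\le p$ and $\omega_c(q)<\omega_c(p)$ for some colour $c$. *)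

(* Defs.v *)
From HB Require Import structures.
From mathcomp Require Import all_boot all_order all_algebra.
Set Implicit Arguments. Unset Strict Implicit. Unset Printing Implicit Defensive.
Import Order.TTheory GRing.Theory Num.Theory.
Local Open Scope ring_scope.

Record wcgraph (R : realFieldType) (V E M : finType) := WCGraph {
  src : E -> V;
  dst : E -> V;
  w : E -> R;
  col : E -> M
}.

Definition wf_wcgraph (R : realFieldType) (V E M : finType)
  (G : wcgraph R V E M) : Prop :=
  (forall e, src G e != dst G e) /\
  (forall e, 0 < w G e) /\
  (forall c : M, exists e, col G e = c).

Definition is_path (R : realFieldType) (V E M : finType)
  (G : wcgraph R V E M) (u v : V) (p : seq E) : Prop :=
  match p with
  | [::] => False
  | e :: p' =>
      [/\ src G e = u,
          path (fun x y => dst G x == src G y) e p',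
          last (dst G e) [seq dst G x | x <- p'] = v &
          uniq (u :: [seq dst G x | x <- p])]
  end.

Definition wc (R : realFieldType) (V E M : finType)
  (G : wcgraph R V E M) (c : M) (p : seq E) : R :=
  \sum_(e <- p | col G e == c) w G e.

Definition path_le (R : realFieldType) (V E M : finType)
  (G : wcgraph R V E M) (p q : seq E) : Prop :=
  forall c : M, wc G c p <= wc G c q.

Definition incomparable (R : realFieldType) (V E M : finType)
  (G : wcgraph R V E M) (p q : seq E) : Prop :=
  ~ path_le G p q /\ ~ path_le G q p.

Definition minimal_path (R : realFieldType) (V E M : finType)
  (G : wcgraph R V E M) (u v : V) (p : seq E) : Prop :=
  is_path G u v p /\
  ~ (exists q, is_path G u v q /\ path_le G q p /\ exists c, wc G c q < wc G c p).

Definition wvec (R : realFieldType) (V E M : finType)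
  (G : wcgraph R V E M) (p : seq E) : {ffun M -> R} :=
  [ffun c => wc G c p].

(* Main.v *)
Require Import Defs.
From HB Require Import structures.
From mathcomp Require Import all_boot all_order all_algebra.
From mathcomp Require Import lra.
From Stdlib Require Import ClassicalDescription.
Set Implicit Arguments. Unset Strict Implicit. Unset Printing Implicit Defensive.
Import Order.TTheory GRing.Theory Num.Theory.
Local Open Scope ring_scope.

Section Main.
Variables (R : realFieldType) (V E M : finType) (G : wcgraph R V E M).
Hypothesis Hw : forall e, 0 < w G e.

Fixpoint walkB (B : {set V}) (x v : V) (p : seq E) : bool :=
  (x \in B) && match p with
              | [::] => x == v
              | e :: p' => (src G e == x) && walkB (B :\ x) (dst G e) v p'
              end.

Definition ent := (V * M * R)%type.

Definition gvec (l : ent) (p : seq E) (c : M) : R :=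
  (if c == l.1.2 then l.2 else 0) + wc G c p.

Definition gpath B v (L : seq ent) (l : ent) p := (l \in L) && walkB B l.1.1 v p.

Definition gmin B v L l p := gpath B v L l p /\
  ~ (exists l' p', gpath B v L l' p' /\ (forall c, gvec l' p' c <= gvec l p c) /\
       exists c, gvec l' p' c < gvec l p c).

Lemma wc_ge0 c p : 0 <= wc G c p.
Proof. rewrite /wc; apply: sumr_ge0 => e _; exact: ltW. Qed.

Lemma wc_cons c e p : wc G c (e :: p) = (if Defs.col G e == c then w G e else 0) + wc G c p.
Proof. by rewrite /wc big_cons; case: ifP => //; rewrite add0r. Qed.

Lemma wc_cat c p q : wc G c (p ++ q) = wc G c p + wc G c q.
Proof. by rewrite /wc big_cat. Qed.

Lemma wc_cons_pos e p : 0 < wc G (Defs.col G e) (e :: p).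
Proof. rewrite wc_cons eqxx; have := Hw e; have := wc_ge0 (Defs.col G e) p; lra. Qed.

Lemma walkB_in B x v p : walkB B x v p -> x \in B.
Proof. by case: p => [|e p] /andP[]. Qed.

Lemma walkB_mono (B1 B2 : {set V}) x v p : B1 \subset B2 -> walkB B1 x v p -> walkB B2 x v p.
Proof.
elim: p B1 B2 x => [|e p IH] B1 B2 x sB /=.
  by case/andP=> xB ->; rewrite (subsetP sB).
case/and3P=> xB -> Hp; rewrite (subsetP sB) //=.
apply: IH Hp; exact: setSD.
Qed.

Lemma walk_split (B : {set V}) x y v p : y != x -> walkB B x v p ->
  walkB (B :\ y) x v p \/
  exists e p1 p2, p = e :: p1 ++ p2 /\ walkB B y v p2.
Proof.
elim: p B x => [|e p IH] B x yx /=.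
  by case/andP=> xB ->; left; rewrite in_setD1 eq_sym yx xB.
case/and3P=> xB /eqP se Hp.
have [dy|dy] := eqVneq (dst G e) y.
  right; exists e, [::], p; split => //.
  by rewrite -dy; apply: (walkB_mono _ Hp); apply: subsetDl.
have yd : y != dst G e by rewrite eq_sym.
case: (IH _ _ yd Hp) => [H|[e1 [p1 [p2 [-> H]]]]].
- left; rewrite in_setD1 eq_sym yx xB se eqxx /=.
  by rewrite setDDl setUC -setDDl.
- right; exists e, (e1 :: p1), p2; split => //.
  by apply: (walkB_mono _ H); apply: subsetDl.
Qed.

End Main.
Lemma count_cover (T : eqType) (I : finType) (P : I -> pred T) (W : seq T) :
  (forall f, f \in W -> exists c, P c f) ->
  (size W <= \sum_(c : I) size (filter (P c) W))%N.
Proof.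
elim: W => [|f W IH] H //=.
have -> : (\sum_(c : I) size (if P c f then f :: filter (P c) W else filter (P c) W)
   = \sum_(c : I) (P c f : nat) + \sum_(c : I) size (filter (P c) W))%N.
  by rewrite -big_split; apply: eq_bigr => c _; case: (P c f).
have [c Pc] := H f (mem_head _ _).
rewrite -add1n; apply: leq_add.
  by rewrite (bigD1 c) //= Pc.
by apply: IH => g gW; apply: H; rewrite inE gW orbT.
Qed.

Definition asb (P : Prop) : bool := if excluded_middle_informative P then true else false.
Lemma asbT (P : Prop) : asb P -> P.
Proof. by rewrite /asb; case: excluded_middle_informative. Qed.
Lemma asbI (P : Prop) : P -> asb P.
Proof. by rewrite /asb; case: excluded_middle_informative. Qed.

Section Main2.
Variables (R : realFieldType) (V E M : finType) (G : wcgraph R V E M).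
Hypothesis Hw : forall e, 0 < w G e.
Local Notation ent := (ent R V M).
Local Notation gv := (gvec G).
Local Notation gpath := (gpath G).
Local Notation gmin := (gmin G).
Local Notation walkB := (walkB G).
Local Notation wc_ge0 := (wc_ge0 Hw).
Local Notation wc_cons_pos := (wc_cons_pos Hw).

Lemma seq_min (s : seq ent) : s != [::] ->
  exists2 l0, l0 \in s & forall l, l \in s -> l0.2 <= l.2.
Proof.
elim: s => // a s IH _.
have [->|ne] := eqVneq s [::].
  by exists a; rewrite ?mem_head // => l; rewrite inE => /eqP ->.
have [b bs Hb] := IH ne.
have [ab|ba] := leP a.2 b.2.
  exists a; first exact: mem_head.
  move=> l; rewrite inE => /orP [/eqP ->//|/Hb]; exact: le_trans.
exists b; first by rewrite inE bs orbT.
move=> l; rewrite inE => /orP [/eqP ->|/Hb //]; exact: ltW.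
Qed.

Section Step.
Variables (B : {set V}) (v : V) (L : seq ent) (c : M) (l0 : ent).
Hypotheses (l0L : l0 \in L) (l0c : l0.1.2 = c) (l0B : l0.1.1 \in B)
  (Hmin : forall l, l \in L -> l.1.2 = c -> l.1.1 \in B -> l0.2 <= l.2)
  (xv : l0.1.1 != v).

Definition L' : seq ent :=
  [seq (l.1.1, c, l.2 - l0.2) | l <- filter (fun l : ent => (l.1.2 == c) && (l.1.1 \in B)) L]
  ++ [seq (dst G e, Defs.col G e, w G e) | e <- filter (fun e => src G e == l0.1.1) (enum E)].

Lemma back m q : gpath (B :\ l0.1.1) v L' m q ->
  exists m0 q0, gpath B v L m0 q0 /\
    forall c', gv m0 q0 c' = gv m q c' + (if c' == c then l0.2 else 0).
Proof.
case/andP => mL Hq; move: mL; rewrite mem_cat => /orP [].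
- case/mapP => l1; rewrite mem_filter => /andP [/andP [/eqP l1c l1B] l1L] me.
  rewrite me in Hq *; exists l1, q; split.
    by rewrite /gpath l1L /=; apply: (walkB_mono _ Hq); apply: subsetDl.
  by move=> c'; rewrite /gvec /= l1c; case: (c' == c) => /=; lra.
- case/mapP => e; rewrite mem_filter mem_enum andbT => /eqP se me.
  rewrite me in Hq *; exists l0, (e :: q); split.
    by rewrite /gpath l0L /= l0B se eqxx.
  move=> c'; rewrite /gvec /= wc_cons l0c [Defs.col G e == _]eq_sym.
  by case: (c' == c); case: (c' == Defs.col G e) => /=; lra.
Qed.

Lemma fwd l p : gmin B v L l p -> l.1.2 = c ->
  exists l' p', gmin (B :\ l0.1.1) v L' l' p' /\
    forall c', gv l' p' c' = gv l p c' - (if c' == c then l0.2 else 0).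
Proof.
move=> [/andP [lL Hwk] Hnm] lc.
have lB := walkB_in Hwk.
have r0l : l0.2 <= l.2 := Hmin lL lc lB.
suff [l' [p' [Hg He]]] : exists l' p', gpath (B :\ l0.1.1) v L' l' p' /\
    forall c', gv l' p' c' = gv l p c' - (if c' == c then l0.2 else 0).
  exists l', p'; split => //; split => // [[m [q [Hmq [Hle [c1 Hlt]]]]]].
  have [m0 [q0 [Hg0 He0]]] := back Hmq.
  apply: Hnm; exists m0, q0; split => //; split.
    by move=> c'; rewrite He0; have := Hle c'; rewrite He; lra.
  by exists c1; rewrite He0; have := He c1; lra.
have [lx|lx] := eqVneq l.1.1 l0.1.1.
- move: (Hwk); rewrite lx; case: p Hnm Hwk => [|e q] Hnm Hwk /=.
    by case/andP => _ /eqP ev; move: xv; rewrite ev eqxx.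
  case/and3P => _ /eqP se Hq.
  have lr : l.2 = l0.2.
    apply/eqP; rewrite eq_le r0l andbT leNgt; apply/negP => lt; apply: Hnm.
    exists l0, (e :: q); split.
      by rewrite /gpath l0L -lx.
    split; first by move=> c'; rewrite /gvec l0c lc; case: (c' == c) => /=; lra.
    by exists c; rewrite /gvec l0c lc eqxx; lra.
  exists (dst G e, Defs.col G e, w G e), q; split.
    rewrite /gpath /= Hq andbT mem_cat; apply/orP; right.
    by apply: map_f; rewrite mem_filter mem_enum se eqxx.
  move=> c'; rewrite /gvec /= wc_cons lc lr [Defs.col G e == _]eq_sym.
  by case: (c' == c); case: (c' == Defs.col G e) => /=; lra.
- have x0l : l0.1.1 != l.1.1 by rewrite eq_sym.
  case: (walk_split x0l Hwk) => [H|[e [p1 [p2 [pe H]]]]].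
    exists (l.1.1, c, l.2 - l0.2), p; split.
      rewrite /gpath /= H andbT mem_cat; apply/orP; left.
      by apply: (map_f (fun l : ent => (l.1.1, c, l.2 - l0.2))); rewrite mem_filter lc eqxx lB.
    by move=> c'; rewrite /gvec /= lc; case: (c' == c) => /=; lra.
  exfalso; apply: Hnm; exists l0, p2; split; first by rewrite /gpath l0L.
  rewrite pe -cat_cons; split.
    move=> c'; rewrite /gvec wc_cat l0c lc; have := wc_ge0 c' (e :: p1).
    by case: (c' == c) => /=; lra.
  exists (Defs.col G e); rewrite /gvec wc_cat l0c lc; have := wc_cons_pos e p1.
  by case: (_ == c) => /=; lra.
Qed.

End Step.
Lemma main n : forall (B : {set V}) v (L : seq ent), #|B| = n ->
  (forall l, l \in L -> 0 <= l.2) ->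
  forall W : seq {ffun M -> R}, uniq W ->
  (forall f, f \in W -> exists l p, gmin B v L l p /\ forall c, f c = gv l p c) ->
  (size W <= #|M| ^ n)%N.
Proof.
elim: n => [|n IH] B v L cB L0 W uW HW.
  case: W uW HW => //= f W _ HW.
  have [l [p [[/andP [_ Hp] _] _]]] := HW f (mem_head _ _).
  by move: (walkB_in Hp); rewrite (cards0_eq cB) inE.
pose P c (f : {ffun M -> R}) := asb (exists l p, gmin B v L l p /\ l.1.2 = c /\ forall c', f c' = gv l p c').
apply: (leq_trans (count_cover (P := P) _)).
  move=> f fW; have [l [p [Hm He]]] := HW f fW; exists l.1.2; apply: asbI.
  by exists l, p.
apply: (@leq_trans (\sum_(c : M) #|M| ^ n)%N); last by rewrite sum_nat_const expnS.
apply: leq_sum => c _.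
have uWc : uniq (filter (P c) W) := filter_uniq _ uW.
have HWc : forall f, f \in filter (P c) W -> exists l p, gmin B v L l p /\ l.1.2 = c /\
    forall c', f c' = gv l p c'.
  by move=> f; rewrite mem_filter => /andP [/asbT H _].
move: (filter (P c) W) uWc HWc => Wc uWc HWc.
have [Lc0|Lcn] := eqVneq (filter (fun l : ent => (l.1.2 == c) && (l.1.1 \in B)) L) [::].
  case: Wc uWc HWc => //= f ? _ H.
  have [l [p [[/andP[lL Hp] _] [lc _]]]] := H f (mem_head _ _).
  have : l \in filter (fun l : ent => (l.1.2 == c) && (l.1.1 \in B)) L.
    by rewrite mem_filter lc eqxx (walkB_in Hp) lL.
  by rewrite Lc0.
have [l0 l0Lc Hm] := seq_min Lcn.
move: l0Lc; rewrite mem_filter => /andP [/andP [/eqP l0c l0B] l0L].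
have Hmin : forall l, l \in L -> l.1.2 = c -> l.1.1 \in B -> l0.2 <= l.2.
  by move=> l lL lc lB; apply: Hm; rewrite mem_filter lc eqxx lB lL.
have [x0v|xv] := eqVneq l0.1.1 v.
  have Hall : forall f, f \in Wc -> f = [ffun c' => gv l0 [::] c'].
    move=> f /HWc [l [p [[Hg Hnm] [lc He]]]].
    apply/ffunP => c'; rewrite ffunE He.
    have Hle : forall c1, gv l0 [::] c1 <= gv l p c1.
      move=> c1; case/andP: Hg => lL Hp; have := Hmin l lL lc (walkB_in Hp).
      have w0 : wc G c1 [::] = 0 by rewrite /wc big_nil.
      rewrite /gvec w0 l0c lc; have := wc_ge0 c1 p; case: (c1 == c) => /=; lra.
    apply/eqP; rewrite eq_le Hle andbT leNgt; apply/negP => lt; apply: Hnm.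
    exists l0, [::]; split; first by rewrite /gpath l0L /= l0B x0v eqxx.
    by split => //; exists c'.
  apply: (leq_trans (uniq_leq_size (s2 := [:: [ffun c' => gv l0 [::] c']]) uWc _)).
    by move=> f /Hall ->; exact: mem_head.
  have : (0 < #|M|)%N by apply/card_gt0P; exists c.
  by rewrite /= expn_gt0 => ->.
pose sh (f : {ffun M -> R}) : {ffun M -> R} := [ffun c' => f c' - (if c' == c then l0.2 else 0)].
rewrite -(size_map sh Wc).
have cB' : #|B :\ l0.1.1| = n.
  by move: cB; rewrite (cardsD1 l0.1.1 B) l0B add1n => -[].
apply: (IH _ v (L' B L c l0) cB').
- move=> l; rewrite mem_cat => /orP [/mapP [l1 Hl1 ->]|/mapP [e _ ->]] /=.
    move: Hl1; rewrite mem_filter => /andP [/andP [/eqP l1c l1B] l1L].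
    by rewrite subr_ge0; apply: Hmin.
  exact: ltW.
- rewrite map_inj_uniq // => f g /ffunP H; apply/ffunP => c'; have := H c'.
  by rewrite !ffunE; case: (c' == c) => /=; lra.
- move=> f' /mapP [f fWc ->].
  have [l [p [Hg [lc He]]]] := HWc f fWc.
  have [l' [p' [Hg' He']]] := fwd l0L l0c l0B Hmin xv Hg lc.
  by exists l', p'; split => // c'; rewrite ffunE He He'.
Qed.

End Main2.

Lemma all_setD1 (T : finType) (B : {set T}) a (s : seq T) :
  all (fun x => x \in B :\ a) s = (a \notin s) && all (fun x => x \in B) s.
Proof.
elim: s => //= x s ->; rewrite in_setD1 in_cons negb_or [x == a]eq_sym.
by case: (a == x); case: (x \in B); case: (a \in s).
Qed.

Section Final.
Variables (R : realFieldType) (V E M : finType) (G : wcgraph R V E M).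

Lemma walkB_iff (B : {set V}) e q v : walkB G B (dst G e) v q =
  [&& path (fun x y => dst G x == src G y) e q,
      last (dst G e) [seq dst G x | x <- q] == v,
      uniq (dst G e :: [seq dst G x | x <- q]) &
      all (fun x => x \in B) (dst G e :: [seq dst G x | x <- q])].
Proof.
elim: q e B => [|f q IH] e B /=.
  by rewrite !andbT andbC.
rewrite IH all_setD1 [src G f == _]eq_sym /=.
move: (dst G e \in B) (dst G e == src G f) (path (fun x y : E => dst G x == src G y) f q)
  (last (dst G f) [seq dst G x | x <- q] == v) (dst G f \notin [seq dst G x | x <- q])
  (uniq [seq dst G x | x <- q]) (dst G e \notin dst G f :: [seq dst G x | x <- q])
  (dst G f \in B) (all (fun x => x \in B) [seq dst G x | x <- q]).
by do 9!case.
Qed.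

Variables (u v : V).
Local Notation B0 := ([set: V] :\ u).
Local Notation L0 := [seq (dst G e, Defs.col G e, w G e) |
   e <- filter (fun e => src G e == u) (enum E)].

Lemma is_path_walk e q : is_path G u v (e :: q) <-> src G e = u /\ walkB G B0 (dst G e) v q.
Proof.
rewrite /is_path walkB_iff all_setD1 /=.
split => [[-> Hp Hl Hu]|[-> /and5P [Hp /eqP Hl Hq Hu _]]].
  split => //; rewrite Hp Hl eqxx /= in_setT /=; case/andP: Hu => -> /andP [-> ->] /=.
  by apply/allP => x _; exact: in_setT.
by split => //=; rewrite Hu.
Qed.

Lemma wc_gv e q c : wc G c (e :: q) = gvec G (dst G e, Defs.col G e, w G e) q c.
Proof. by rewrite /gvec wc_cons /= eq_sym. Qed.

Lemma min_to_gmin p : minimal_path G u v p ->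
  exists l q, gmin G B0 v L0 l q /\ forall c, wc G c p = gvec G l q c.
Proof.
case: p => [[[]]|e q [Hp Hnm]].
have [se Hwk] := (is_path_walk e q).1 Hp.
exists (dst G e, Defs.col G e, w G e), q; split; last by move=> c; exact: wc_gv.
split.
  rewrite /gpath Hwk andbT; apply: (map_f (fun e => (dst G e, Defs.col G e, w G e))).
  by rewrite mem_filter mem_enum se eqxx.
move=> [l' [q' [/andP [l'L Hq'] [Hle [c Hlt]]]]]; apply: Hnm.
move: l'L Hq' Hle Hlt => /mapP [e' He' ->] Hq' Hle Hlt.
move: He'; rewrite mem_filter mem_enum andbT => /eqP se'.
exists (e' :: q'); split; first by apply/is_path_walk.
split; first by move=> c'; rewrite !wc_gv.
by exists c; rewrite !wc_gv.
Qed.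

End Final.

Theorem theorem2 (R : realFieldType) (V E M : finType) (G : wcgraph R V E M)
  (HG : wf_wcgraph G) (Hn : (2 <= #|V|)%N) (u v : V) (Huv : u != v) :
  (forall S : seq (seq E),
     uniq S ->
     (forall p, p \in S -> minimal_path G u v p) ->
     (forall p q, p \in S -> q \in S -> p != q -> incomparable G p q) ->
     (size S <= #|M| ^ (#|V| - 1))%N)
  /\
  (forall W : seq {ffun M -> R},
     uniq W ->
     (forall x, x \in W -> exists p, minimal_path G u v p /\ x = wvec G p) ->
     (size W <= #|M| ^ (#|V| - 1))%N).
Proof.
have Hw : forall e, 0 < w G e by case: HG => _ [].
have cB0 : #|[set: V] :\ u| = (#|V| - 1)%N.
  by have := cardsD1 u [set: V]; rewrite cardsT in_setT add1n => ->; rewrite subn1.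
have P2 : forall W : seq {ffun M -> R}, uniq W ->
     (forall x, x \in W -> exists p, minimal_path G u v p /\ x = wvec G p) ->
     (size W <= #|M| ^ (#|V| - 1))%N.
  move=> W uW HW.
  apply: (main Hw (v := v) (L := [seq (dst G e, Defs.col G e, w G e) |
   e <- filter (fun e => src G e == u) (enum E)]) cB0) => //.
    by move=> l /mapP [e _ ->] /=; exact: ltW.
  move=> f /HW [p [Hm ->]].
  have [l [q [Hg He]]] := min_to_gmin Hm.
  by exists l, q; split => // c; rewrite /wvec ffunE He.
split => // S uS HS Hinc.
rewrite -(size_map (wvec G) S); apply: P2.
  rewrite map_inj_in_uniq // => p q pS qS Heq.
  have [//|ne] := eqVneq p q.
  have [H1 _] := Hinc p q pS qS ne; exfalso; apply: H1 => c.
  by have := congr1 (fun f : {ffun M -> R} => f c) Heq; rewrite /wvec !ffunE => ->.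
by move=> x /mapP [p pS ->]; exists p; split => //; apply: HS.
Qed.
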